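(* Let $X=\{x_1,\dots,x_t\}$ with $x_1<x_2<\dots<x_t$, and let $x=(x_{i_1},\dots,x_{i_m})$ be a time series with values in $X$ satisfying $\mathrm{set}(x)=X$. Let $Y=\{y_1,\dots,y_t\}$ with $y_1<y_2<\dots<y_t$, and let $y=(y_{i_1},\dots,y_{i_m})$ (with the same index sequence $i_1,\dots,i_m$) be a time series with values in $Y$ satisfying $\mathrm{set}(y)=Y$. Then for every $\ell\in\mathbb{N}$, $D_{(x,\ell)}=D_{(y,\ell)}$.
   Context: A time series of complexity $m$ is a vector in $\mathbb{R}^m$; $\mathrm{set}(x)$ is the set of entries of $x$, and $\mathrm{rank}_x(z)$ is the rank of $z\in\mathrm{set}(x)$ in $\mathrm{set}(x)$ (ordered increasingly). For $x\in\mathbb{R}^m$ and $y\in\mathbb{R}^\ell$, a traversal is a sequence of index pairs $(i,j)\in[m]\times[\ell]$ starting at $(1,1)$, ending at $(m,\ell)$, in which each pair $(i,j)$ is followed by one of $(i,j+1)$, $(i+1,j)$, $(i+1,j+1)$; $x_i$ and $y_j$ are matched if $(i,j)$ occurs in it. For a traversal $M$ of $x$ with a time series of complexity $\ell$, the traversal sectors are $S^{(x,M)}_j=\{x_i: x_i \text{ matched with the } j\text{-th vertex by } M\}$, $j\in[\ell]$, and the $\ell$-profile of $(x,M)$ is $\big((\mathrm{rank}_x(\min S^{(x,M)}_j),\mathrm{rank}_x(\max S^{(x,M)}_j))\big)_{j=1}^{\ell}$. $D_{(x,\ell)}$ is the set of all $\ell$-profiles of $(x,M)$ over all such traversals $M$.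 *)

(* Defs.v *)
From mathcomp Require Import all_boot all_order all_algebra.
Set Implicit Arguments. Unset Strict Implicit. Unset Printing Implicit Defensive.
Import Order.TTheory GRing.Theory Num.Theory.
Local Open Scope ring_scope.

(* Time series of complexity m over a real-closed/real field R: 'rV[R]_m is
   avoided; we use functions 'I_m -> R.  Indices are 0-based internally. *)

Section TS.
Variable R : realFieldType.

Definition ts_set (m : nat) (x : 'I_m -> R) : seq R := undup [seq x i | i <- enum 'I_m].

Definition ts_rank (m : nat) (x : 'I_m -> R) (z : R) : nat :=
  (count (fun w => w < z) (ts_set x)).+1.

Definition step (p q : nat * nat) : bool :=
  [|| q == (p.1, p.2.+1), q == (p.1.+1, p.2) | q == (p.1.+1, p.2.+1)].

Definition is_traversal (m l : nat) (M : seq (nat * nat)) : bool :=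
  [&& (0 < m)%N, (0 < l)%N, head (0%N, 0%N) M == (0%N, 0%N) , M != [::],
      last (0%N, 0%N) M == (m.-1, l.-1),
      sorted step M & all (fun p => (p.1 < m) && (p.2 < l))%N M].

Definition sector (m : nat) (x : 'I_m -> R) (M : seq (nat * nat)) (j : nat) : seq R :=
  [seq x i | i <- enum 'I_m & ((nat_of_ord i, j) \in M)].

Definition seq_min (s : seq R) : R := foldr Num.min (head 0 s) s.
Definition seq_max (s : seq R) : R := foldr Num.max (head 0 s) s.

Definition profile (m : nat) (x : 'I_m -> R) (l : nat) (M : seq (nat * nat))
  : seq (nat * nat) :=
  [seq (ts_rank x (seq_min (sector x M j)), ts_rank x (seq_max (sector x M j)))
  | j <- iota 0 l].

Definition D_set (m : nat) (x : 'I_m -> R) (l : nat) : seq (nat * nat) -> Prop :=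
  fun P => exists M, is_traversal m l M /\ P = profile x l M.

End TS.

(* Main.v *)
Require Import Defs.
From mathcomp Require Import all_boot all_order all_algebra.
From mathcomp Require Import zify.
From Stdlib Require Import FunctionalExtensionality PropExtensionality.
Import Order.TTheory GRing.Theory Num.Theory.
Local Open Scope ring_scope.
Set Implicit Arguments. Unset Strict Implicit.

Lemma path_cover p s : path step p s -> forall j,
  (p.2 <= j <= (last p s).2)%N -> exists2 q, q \in p :: s & q.2 = j.
Proof.
elim: s p => [|a s IH] p /=.
  move=> _ j /andP[h1 h2]; exists p; first by rewrite mem_head.
  by apply/eqP; rewrite eqn_leq h1 h2.
move=> /andP[st pa] j /andP[h1 h2].
case: (ltnP p.2 j) => hj.
  have ha : (a.2 <= j)%N.
    by move: st; rewrite /step => /or3P[]/eqP-> /=; lia.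
  have [q qin qj] := IH a pa j (introT andP (conj ha h2)).
  by exists q => //; rewrite inE qin orbT.
by exists p; [rewrite mem_head | apply/eqP; rewrite eqn_leq h1 hj].
Qed.

Lemma trav_cover m l M j : is_traversal m l M -> (j < l)%N ->
  exists i : 'I_m, (nat_of_ord i, j) \in M.
Proof.
case/and5P=> m0 l0 hd Mn /and3P[lst srt al] jl.
case: M hd Mn lst srt al => [|p s] //= /eqP hp _ /eqP hl srt al.
have hj : (p.2 <= j <= (last p s).2)%N by rewrite hl hp /=; lia.
have [q qin qj] := @path_cover p s srt j hj.
have /andP[q1 q2] := allP (al : all (fun p : nat * nat => (p.1 < m)%N && (p.2 < l)%N) (p :: s)) q qin.
exists (Ordinal q1) => /=.
by rewrite -qj -surjective_pairing.
Qed.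

Section Key.
Variables (R : realFieldType) (t m : nat) (idx : 'I_m -> 'I_t).
Hypothesis hsurj : forall a : 'I_t, exists k : 'I_m, idx k = a.

Definition minI (a b : 'I_t) := if (a <= b)%N then a else b.
Definition maxI (a b : 'I_t) := if (a <= b)%N then b else a.

Section F.
Variable F : 'I_t -> R.
Hypothesis hF : forall a b : 'I_t, (a < b)%N -> F a < F b.

Lemma Fle (a b : 'I_t) : (a <= b)%N -> F a <= F b.
Proof.
rewrite leq_eqVlt => /orP[/eqP/val_inj->//|/hF/ltW//].
Qed.

Lemma Flt (a b : 'I_t) : (F a < F b) = (a < b)%N.
Proof.
case: (ltnP a b) => h; first by rewrite hF.
by apply/negbTE; rewrite -leNgt Fle.
Qed.

Lemma foldr_min (c : 'I_t) s : foldr Num.min (F c) (map F s) = F (foldr minI c s).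
Proof.
elim: s => [|a s IH] //=; rewrite IH /minI.
case: ifP => h; first by rewrite min_l // Fle.
by rewrite min_r // Fle // ltnW // ltnNge h.
Qed.

Lemma foldr_max (c : 'I_t) s : foldr Num.max (F c) (map F s) = F (foldr maxI c s).
Proof.
elim: s => [|a s IH] //=; rewrite IH /maxI.
case: ifP => h; first by rewrite max_r // Fle.
by rewrite max_l // Fle // ltnW // ltnNge h.
Qed.

Lemma rankF (a : 'I_t) : ts_rank (fun k => F (idx k)) (F a) =
  (count (fun b : 'I_t => (b < a)%N) (enum 'I_t)).+1.
Proof.
rewrite /ts_rank /ts_set; congr S.
have Finj : injective F.
  move=> b c e; case: (ltngtP b c) => h.
  - by move: (hF h); rewrite e ltxx.
  - by move: (hF h); rewrite e ltxx.
  - exact: val_inj.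
have pe : perm_eq (undup [seq F (idx i) | i <- enum 'I_m]) (map F (enum 'I_t)).
  apply: uniq_perm; first exact: undup_uniq.
    by rewrite map_inj_uniq // enum_uniq.
  move=> w; rewrite mem_undup; apply/mapP/mapP => [[k _ ->]|[b _ ->]].
    by exists (idx k); rewrite ?mem_enum.
  by have [k <-] := hsurj b; exists k; rewrite ?mem_enum.
rewrite (permP pe) count_map; apply: eq_count => b /=.
by rewrite Flt.
Qed.

End F.
End Key.

Theorem lemma4p5 (R : realFieldType) (t m : nat)
  (X Y : 'I_t -> R)
  (hX : forall a b : 'I_t, (a < b)%N -> X a < X b)
  (hY : forall a b : 'I_t, (a < b)%N -> Y a < Y b)
  (idx : 'I_m -> 'I_t)
  (hsurj : forall a : 'I_t, exists k : 'I_m, idx k = a)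
  (l : nat) :
  D_set (fun k => X (idx k)) l = D_set (fun k => Y (idx k)) l.
Proof.
have key : forall M, is_traversal m l M ->
    profile (fun k => X (idx k)) l M = profile (fun k => Y (idx k)) l M.
  move=> M tr; rewrite /profile; apply/eq_in_map => j; rewrite mem_iota add0n => /andP[_ jl].
  have [i0 hi0] := trav_cover tr jl.
  set S := [seq idx i | i <- enum 'I_m & ((nat_of_ord i, j) \in M)].
  have eS : forall F : 'I_t -> R, sector (fun k => F (idx k)) M j = map F S.
    by move=> F; rewrite /sector /S map_comp.
  have : idx i0 \in S by apply: map_f; rewrite mem_filter hi0 mem_enum.
  case eq: S => [|a s] // _.
  rewrite !eS eq /seq_min /seq_max [head _ (map X _)]/= [head _ (map Y _)]/=.
  rewrite (foldr_min hX a (a :: s)) (foldr_min hY a (a :: s)).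
  rewrite (foldr_max hX a (a :: s)) (foldr_max hY a (a :: s)).
  by rewrite !(rankF hsurj hX) !(rankF hsurj hY).
apply: functional_extensionality => P; apply: propositional_extensionality.
by split=> -[M [tr ->]]; exists M; split=> //; rewrite key.
Qed.
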